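(* Let $(N,{\mathcal{S}},K)$ be an instance of MaxCover with $|{\mathcal{S}}|=m\ge K$ sets, where every element of $N$ belongs to at least $p\ge1$ sets of ${\mathcal{S}}$. Then the greedy algorithm returns $K$ sets covering at least $\left(1-e^{-\max(pK/m,\,1)}\right)\cdot\mathrm{OPT}$ elements, where $\mathrm{OPT}$ is the maximum number of elements coverable by $K$ sets of ${\mathcal{S}}$.
   Context: The greedy algorithm: start with $C=\emptyset$; for $i=1,\dots,K$, add to $C$ a set $S\in{\mathcal{S}}\setminus C$ maximizing $|S\setminus\bigcup_{T\in C}T|$ (ties broken arbitrarily); return $C$. *)

(* Defs.v *)
From mathcomp Require Import all_boot.
From Stdlib Require Import Reals.

Set Implicit Arguments.
Unset Strict Implicit.
Unset Printing Implicit Defensive.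

Section MaxCover.
Variable T : finType.

Definition cover_seq (C : seq {set T}) : {set T} := \bigcup_(A <- C) A.

Definition greedy_choice (S : {set {set T}}) (prev : seq {set T}) (A : {set T}) : bool :=
  [&& A \in S, A \notin prev &
   [forall B in S, (B \notin prev) ==>
      (#|B :\: cover_seq prev| <= #|A :\: cover_seq prev|)]].

(* C = [:: C_1; ...; C_K] is a possible output (run) of the greedy algorithm
   with K = size C iterations. *)
Definition greedy_run (S : {set {set T}}) (C : seq {set T}) : Prop :=
  forall i, i < size C -> greedy_choice S (take i C) (nth set0 C i).

Definition OPT (S : {set {set T}}) (K : nat) : nat :=
  \max_(D in powerset S | #|D| == K) #|\bigcup_(A in D) A|.

End MaxCover.

(* Main.v *)
Require Import Defs.
From mathcomp Require Import all_boot.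
From Stdlib Require Import Reals Lra Psatz.


Lemma card_bigcup_le (T : finType) (I : finType) (D : pred I) (F : I -> {set T}) :
  #|\bigcup_(B | D B) F B| <= \sum_(B | D B) #|F B|.
Proof.
apply: (big_ind2 (fun (X : {set T}) n => #|X| <= n)) => //.
- by rewrite cards0.
- move=> X1 n1 X2 n2 h1 h2; rewrite cardsU.
  apply: leq_trans (leq_subr _ _) _; exact: leq_add.
Qed.

Lemma cover_rcons (T : finType) (s : seq {set T}) A :
  cover_seq (rcons s A) = cover_seq s :|: A.
Proof. by rewrite /cover_seq big_rcons. Qed.

Lemma mem_cover (T : finType) (s : seq {set T}) B :
  B \in s -> B \subset cover_seq s.
Proof.
move=> Hin; rewrite /cover_seq (big_rem _ Hin) /=; exact: subsetUl.
Qed.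

Lemma card_cover_step (T : finType) (X A : {set T}) :
  #|X :|: A| = #|X| + #|A :\: X|.
Proof.
have -> : X :|: A = X :|: (A :\: X) by rewrite setDE setUIr setUCr setIT.
rewrite cardsU.
have -> : X :&: (A :\: X) = set0.
  by apply/setP=> x; rewrite !inE; case: (x \in X); rewrite ?andbF.
by rewrite cards0 subn0.
Qed.

Lemma greedy_bound (T : finType) (S : {set {set T}}) prev A B :
  greedy_choice S prev A -> B \in S ->
  #|B :\: cover_seq prev| <= #|A :\: cover_seq prev|.
Proof.
case/and3P=> _ _ /forall_inP H BS.
case: (boolP (B \in prev)) => Bp.
  have -> : B :\: cover_seq prev = set0.
    by apply/eqP; rewrite setD_eq0 mem_cover.
  by rewrite cards0.
by move/implyP: (H B BS); apply.
Qed.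

Lemma step_opt (T : finType) (S : {set {set T}}) prev A (D : {set {set T}}) :
  greedy_choice S prev A -> D \subset S ->
  #|\bigcup_(B in D) B| <= #|cover_seq prev| + #|D| * #|A :\: cover_seq prev|.
Proof.
move=> G DS.
set c := cover_seq prev.
have -> : \bigcup_(B in D) B = c :&: (\bigcup_(B in D) B) :|: \bigcup_(B in D) (B :\: c).
  apply/setP=> x; rewrite !inE; apply/idP/idP.
    move=> Hx; case: (boolP (x \in c)) => xc /=; first by rewrite Hx.
    case/bigcupP: Hx => B BD xB;  apply/bigcupP; exists B => //.
    by rewrite !inE xc xB.
  case/orP; first by case/andP.
  case/bigcupP=> B BD; rewrite !inE => /andP[_ xB]; apply/bigcupP; by exists B.
rewrite cardsU; apply: leq_trans (leq_subr _ _) _.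
apply: leq_add; first by rewrite subset_leq_card // subsetIl.
apply: (leq_trans (card_bigcup_le _ _ (fun B => B \in D) (fun B => B :\: c))).
rewrite -sum1_card big_distrl /=.
apply: leq_sum => B BD; rewrite mul1n; apply: greedy_bound G _.
exact: (subsetP DS).
Qed.

Lemma step_N (T : finType) (N : {set T}) (S : {set {set T}}) (p : nat) prev A :
  (forall A, A \in S -> A \subset N) ->
  (forall x, x \in N -> p <= #|[set A in S | x \in A]|) ->
  greedy_choice S prev A ->
  p * #|N| <= p * #|cover_seq prev| + #|S| * #|A :\: cover_seq prev|.
Proof.
move=> SN Hp G.
set c := cover_seq prev.
have HN : #|N| <= #|c| + #|N :\: c|.
  rewrite -card_cover_step; apply: subset_leq_card; exact: subsetUr.
apply: leq_trans (leq_mul (leqnn p) HN) _.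
rewrite mulnDr leq_add2l.
have E : \sum_(B in S) #|B :\: c| = \sum_(x in N :\: c) #|[set B in S | x \in B]|.
  transitivity (\sum_(B in S) \sum_(x in N :\: c) (x \in B : nat)).
    apply: eq_bigr => B BS.
    rewrite -sum1_card big_mkcond /= [RHS]big_mkcond /=.
    apply: eq_bigr => x _; rewrite !inE.
    case: (x \in B) (x \in c) (x \in N) (subsetP (SN B BS) x) => [] [] [] //= h.
    by have := h erefl.
  rewrite exchange_big /=; apply: eq_bigr => x _.
  rewrite -sum1_card [RHS]big_mkcond /= [LHS]big_mkcond /=.
  by apply: eq_bigr => B _; rewrite !inE; case: (B \in S); case: (x \in B).
have L1 : p * #|N :\: c| <= \sum_(B in S) #|B :\: c|.
  rewrite E -sum1_card big_distrr /=; apply: leq_sum => x; rewrite muln1.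
  by rewrite inE => /andP[_ xN]; apply: Hp.
apply: leq_trans L1 _.
rewrite -sum1_card big_distrl /=; apply: leq_sum => B BS; rewrite mul1n.
exact: greedy_bound G BS.
Qed.
Section RealPart.
Local Open Scope R_scope.
Lemma INR_addn (a b : nat) : INR (a + b)%nat = INR a + INR b.
Proof. exact: plus_INR. Qed.
Lemma INR_muln (a b : nat) : INR (a * b)%nat = INR a * INR b.
Proof. exact: mult_INR. Qed.
Lemma INR_leq (a b : nat) : (a <= b)%nat -> INR a <= INR b.
Proof. by move/leP; apply: le_INR. Qed.

Lemma exp_pow_nat (x : R) (n : nat) : exp x ^ n = exp (x * INR n).
Proof.
elim: n => [|n IH]; first by rewrite /= Rmult_0_r exp_0.
rewrite S_INR /= IH -exp_plus; f_equal; ring.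
Qed.

Lemma geom (g : nat -> R) (Q a : R) (K : nat) :
  0 <= a /\ a <= 1 -> g O = 0 -> 0 <= Q ->
  (forall i, (i < K)%nat -> a * (Q - g i) <= g i.+1 - g i) ->
  (1 - exp (- (a * INR K))) * Q <= g K.
Proof.
move=> [a0 a1] g0 Q0 H.
have Hi : forall i, (i <= K)%nat -> Q - g i <= (1 - a) ^ i * Q.
  elim=> [|i IH] hi; first by rewrite g0 /=; lra.
  have := H i hi; have := IH (ltnW hi) => h1 h2.
  rewrite /=.
  have : (1 - a) * (Q - g i) <= (1 - a) * ((1 - a) ^ i * Q).
    apply: Rmult_le_compat_l; lra.
  lra.
have HK := Hi K (leqnn K).
have E : (1 - a) ^ K <= exp (- (a * INR K)).
  have -> : - (a * INR K) = (- a) * INR K by ring.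
  rewrite -exp_pow_nat; apply: pow_incr; split; first lra.
  have := exp_ineq1_le (- a); lra.
have : (1 - a) ^ K * Q <= exp (- (a * INR K)) * Q.
  by apply: Rmult_le_compat_r.
lra.
Qed.
Lemma exp_le1 r : 0 <= r -> exp (- r) <= 1.
Proof.
move=> r0; have h := exp_plus (- r) r; rewrite Rplus_opp_l exp_0 in h.
have := exp_ineq1_le r; have := exp_pos (- r); nra.
Qed.

Lemma opt_ind (T : finType) (S : {set {set T}}) (K : nat) (c x : R) :
  0 <= x ->
  (forall D : {set {set T}}, D \subset S -> #|D| = K -> c * INR #|\bigcup_(A in D) A| <= x) ->
  c * INR (OPT S K) <= x.
Proof.
move=> x0 H; rewrite /OPT.
apply: (big_ind (fun n => c * INR n <= x)).
- by rewrite /= Rmult_0_r.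
- move=> a b ha hb /=; rewrite /maxn; by case: ifP.
- move=> D /andP[]; rewrite powersetE => DS /eqP DK; exact: H.
Qed.
End RealPart.

Theorem mainTheorem8 (T : finType) (N : {set T}) (S : {set {set T}})
    (K p : nat) (C : seq {set T}) :
  (forall A, A \in S -> A \subset N) ->
  K <= #|S| ->
  1 <= p ->
  (forall x, x \in N -> p <= #|[set A in S | x \in A]|) ->
  greedy_run S C ->
  size C = K ->
  ((1 - exp (- Rmax (INR p * INR K / INR #|S|) 1)) * INR (OPT S K)
     <= INR #|cover_seq C|)%R.
Proof.
move=> SN KS p1 Hp G sC.
pose g i := INR #|cover_seq (take i C)|.
have g0 : g O = 0%R by rewrite /g take0 /cover_seq big_nil cards0.
have gK : g K = INR #|cover_seq C| by rewrite /g -sC take_size.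
rewrite -gK.
have gKpos : (0 <= g K)%R by apply: pos_INR.
have step : forall i, i < K ->
   greedy_choice S (take i C) (nth set0 C i) /\
   (g i.+1 - g i = INR #|nth set0 C i :\: cover_seq (take i C)|)%R.
  move=> i iK; have iC : i < size C by rewrite sC.
  split; first exact: G.
  rewrite /g (take_nth set0 iC) cover_rcons card_cover_step INR_addn; ring.
have m0 : (0 <= INR #|S|)%R by apply: pos_INR.
case: (Rle_lt_dec 1 (INR p * INR K / INR #|S|)) => Hr.
- rewrite Rmax_left //.
  set r := (INR p * INR K / INR #|S|)%R in Hr *.
  have mpos : (0 < INR #|S|)%R.
    case: (Rle_lt_or_eq_dec _ _ m0) => // h.
    by move: Hr; rewrite /r -h /Rdiv Rinv_0 Rmult_0_r; lra.
  case: (set_0Vmem N) => [N0|[x0 xN]].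
    have -> : OPT S K = 0.
      apply/eqP; rewrite -leqn0 /OPT; apply/bigmax_leqP => D /andP[]; rewrite powersetE => DS _.
      have <- : #|N| = 0 by rewrite N0 cards0.
      apply: subset_leq_card; apply/bigcupsP => B BD.
      by apply: SN; apply: (subsetP DS).
    rewrite Rmult_0_r; exact: gKpos.
  have pm : p <= #|S|.
    apply: leq_trans (Hp _ xN) _; apply: subset_leq_card.
    by apply/subsetP=> B; rewrite inE => /andP[].
  have cpos : (0 <= 1 - exp (- r))%R.
    have := exp_le1 r; lra.
  have HN : ((1 - exp (- r)) * INR #|N| <= g K)%R.
    have -> : r = (INR p / INR #|S| * INR K)%R by rewrite /r; field; lra.
    apply: geom => //; [split| exact: pos_INR |].
    + apply: Rmult_le_pos; [exact: pos_INR | apply: Rlt_le; exact: Rinv_0_lt_compat].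
    + apply/(Rmult_le_reg_r (INR #|S|)) => //.
      rewrite /Rdiv Rmult_assoc Rinv_l ?Rmult_1_r ?Rmult_1_l; last lra.
      exact: INR_leq.
    + move=> i iK; have [Gi ->] := step i iK.
      have := step_N _ _ _ _ _ _ SN Hp Gi; move/INR_leq.
      rewrite !INR_addn !INR_muln -/(g i) => h.
      apply/(Rmult_le_reg_l (INR #|S|)) => //.
      have -> : (INR #|S| * (INR p / INR #|S| * (INR #|N| - g i)) = INR p * INR #|N| - INR p * g i)%R
        by field; lra.
      lra.
  apply: opt_ind => // D DS DK.
  apply: Rle_trans HN; apply: Rmult_le_compat_l => //.
  apply: INR_leq; apply: subset_leq_card; apply/bigcupsP => B BD.
  by apply: SN; apply: (subsetP DS).
- rewrite Rmax_right; last lra.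
  apply: opt_ind => // D DS DK.
  case: (posnP K) => [K0 | Kpos].
    have -> : D = set0 by apply: cards0_eq; rewrite DK K0.
    rewrite big_set0 cards0 /= Rmult_0_r; exact: gKpos.
  have Kr : (0 < INR K)%R by apply: lt_0_INR; apply/ltP.
  have -> : (Ropp 1 = - (/ INR K * INR K))%R by field; lra.
  apply: geom => //; [split| exact: pos_INR |].
  + apply: Rlt_le; exact: Rinv_0_lt_compat.
  + apply/(Rmult_le_reg_r (INR K)) => //.
    have K1 := INR_leq 1 K Kpos; simpl in K1; rewrite Rinv_l; [lra | exact: Rgt_not_eq].
  + move=> i iK; have [Gi ->] := step i iK.
    have := step_opt _ _ _ _ _ Gi DS; move/INR_leq.
    rewrite !INR_addn !INR_muln DK -/(g i) => h.
    apply/(Rmult_le_reg_l (INR K)) => //.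
    have -> : (INR K * (/ INR K * (INR #|\bigcup_(A in D) A| - g i)) = INR #|\bigcup_(A in D) A| - g i)%R
      by field; lra.
    lra.
Qed.
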